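(* Let $f$, $\mathcal{I}$, and the notation for streams be as in the context, and let $0 < c \le 1$ and $\epsilon > 0$. Let $\mathcal{A}$ be an algorithm with the $c$-approximation property (not necessarily monotone). Let $S_1, S_2, S_3$ be finite streams and suppose $\mathcal{A}(S_1\circ S_2) \le (1+\epsilon)\,\mathcal{A}(S_2)$. Then $$\mathcal{A}(S_2\circ S_3) \ge \frac{c^2}{c+1+\epsilon}\, f(\mathtt{OPT}_{123}),$$ where $\mathtt{OPT}_{123}$ is an optimal solution for the stream $S_1\circ S_2\circ S_3$.
   Context: Let $U$ be a finite set of items and $f: 2^U \to \mathbb{R}_{\ge 0}$ a nonnegative submodular function, i.e. $f(A\cup\{v\}) - f(A) \ge f(B\cup\{v\}) - f(B)$ for all $A\subseteq B\subset U$ and $v\in U\setminus B$. Let $\mathcal{I}\subseteq 2^U$ be a hereditary constraint: $A\in\mathcal{I}$ and $A'\subseteq A$ imply $A'\in\mathcal{I}$ (with $\emptyset\in\mathcal{I}$). A stream is a finite sequence of items of $U$; $S_1\circ S_2$ denotes concatenation. For a stream $S$, an optimal solution $\mathtt{OPT}_S$ is a set maximizing $f$ over all sets in $\mathcal{I}$ consisting of items occurring in $S$. An algorithm $\mathcal{A}$ maps each stream $S$ to a set in $\mathcal{I}$ consisting of items occurring in $S$; $\mathcal{A}(S)$ denotes the $f$-value of that set. $\mathcal{A}$ has the $c$-approximation property if for every stream $S$, $\mathcal{A}(S)\ge c\cdot f(\mathtt{OPT}_S)$. *)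

(* Defs.v *)
From HB Require Import structures.
From mathcomp Require Import all_boot all_order all_algebra.
Set Implicit Arguments. Unset Strict Implicit. Unset Printing Implicit Defensive.
Import Order.TTheory GRing.Theory Num.Theory.
Local Open Scope ring_scope.

Definition stream (U : finType) := seq U.

Definition items (U : finType) (S : stream U) : {set U} := [set x | x \in S].

Definition nonneg_fun (R : realFieldType) (U : finType) (f : {set U} -> R) :=
  forall A, 0 <= f A.

Definition submodular (R : realFieldType) (U : finType) (f : {set U} -> R) :=
  forall (A B : {set U}) (v : U), A \subset B -> v \notin B ->
    f (v |: B) - f B <= f (v |: A) - f A.

Definition hereditary (U : finType) (I : pred {set U}) :=
  I set0 /\ forall A A' : {set U}, I A -> A' \subset A -> I A'.

Definition is_opt (R : realFieldType) (U : finType) (f : {set U} -> R)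
    (I : pred {set U}) (S : stream U) (O : {set U}) :=
  [/\ I O, O \subset items S &
      forall A : {set U}, I A -> A \subset items S -> f A <= f O].

Definition valid_alg (U : finType) (I : pred {set U}) (Alg : stream U -> {set U}) :=
  forall S, I (Alg S) /\ Alg S \subset items S.

Definition c_approx (R : realFieldType) (U : finType) (f : {set U} -> R)
    (I : pred {set U}) (Alg : stream U -> {set U}) (c : R) :=
  forall (S : stream U) (O : {set U}), is_opt f I S O -> c * f O <= f (Alg S).

(* Main.v *)
Require Import Defs.
From HB Require Import structures.
From mathcomp Require Import all_boot all_order all_algebra.
From mathcomp Require Import lra.
Import Order.TTheory GRing.Theory Num.Theory.
Local Open Scope ring_scope.

Lemma opt_exists (R : realFieldType) (U : finType) (f : {set U} -> R)
  (I : pred {set U}) (S : stream U) : I set0 -> exists O, is_opt f I S O.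
Proof.
move=> I0.
have P0 : (I set0 && (set0 \subset items S)) by rewrite I0 sub0set.
case: (@Order.TotalTheory.arg_maxP _ R _ set0 (fun A => I A && (A \subset items S)) f P0)
  => O /andP[IO sO] H.
by exists O; split=> // A IA sA; apply: H; rewrite IA sA.
Qed.

Lemma subadd (R : realFieldType) (U : finType) (f : {set U} -> R) :
  submodular f -> forall n (X Y : {set U}), #|Y| = n -> [disjoint X & Y] ->
  f (X :|: Y) <= f X + f Y - f set0.
Proof.
move=> sm; elim=> [|n IH] X Y cY dXY.
  move/eqP: cY; rewrite cards_eq0 => /eqP ->.
  by rewrite setU0 addrK.
have [v vY] : exists v, v \in Y.
  by apply/set0Pn; rewrite -card_gt0 cY.
set Y' := Y :\ v.
have cY' : #|Y'| = n by move: (cardsD1 v Y); rewrite vY cY add1n => -[].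
have dXY' : [disjoint X & Y'].
  by apply: disjointWr dXY; rewrite subsetDl.
have eY : Y = v |: Y' by rewrite setD1K.
have vX : v \notin X.
  by move: dXY; rewrite disjoint_sym => /disjointFr /(_ vY) ->.
have h1 := IH X Y' cY' dXY'.
have h2 := sm Y' (X :|: Y') v (subsetUr _ _).
have vn : v \notin X :|: Y' by rewrite in_setU negb_or vX /Y' setD11.
have := h2 vn.
have -> : v |: (X :|: Y') = X :|: Y by rewrite eY setUCA.
rewrite -eY => h3.
lra.
Qed.

Theorem lemma2 (R : realFieldType) (U : finType) (f : {set U} -> R)
  (I : pred {set U}) (Alg : stream U -> {set U}) (c eps : R)
  (S1 S2 S3 : stream U) (O123 : {set U}) :
  nonneg_fun f -> submodular f -> hereditary I ->
  0 < c -> c <= 1 -> 0 < eps ->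
  valid_alg I Alg -> c_approx f I Alg c ->
  f (Alg (S1 ++ S2)) <= (1 + eps) * f (Alg S2) ->
  is_opt f I (S1 ++ S2 ++ S3) O123 ->
  c ^+ 2 / (c + 1 + eps) * f O123 <= f (Alg (S2 ++ S3)).
Proof.
move=> fnn sm [I0 Ih] c0 c1 e0 va ca hA [IO sO _].
have [O12 [IO12 sO12 opt12]] := @opt_exists R U f I (S1 ++ S2) I0.
have [O23 [IO23 sO23 opt23]] := @opt_exists R U f I (S2 ++ S3) I0.
have /ca h12 : is_opt f I (S1 ++ S2) O12 by [].
have /ca h23 : is_opt f I (S2 ++ S3) O23 by [].
set X := O123 :&: items (S1 ++ S2).
set Y := O123 :\: items (S1 ++ S2).
have eO : O123 = X :|: Y by rewrite /X /Y setID.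
have dXY : [disjoint X & Y].
  by rewrite disjoints_subset; apply/subsetP => y; rewrite !inE => /andP[_ ->].
have hsub := @subadd R U f sm _ X Y (erefl #|Y|) dXY.
rewrite -eO in hsub.
have fX : f X <= f O12.
  apply: opt12; first by apply: Ih IO _; rewrite subsetIl.
  by rewrite subsetIr.
have fY : f Y <= f O23.
  apply: opt23; first by apply: Ih IO _; rewrite subsetDl.
  apply/subsetP => y; rewrite !inE => /andP[ny yO].
  have := subsetP sO y yO; rewrite !inE !mem_cat.
  by move: ny; rewrite mem_cat negb_or => /andP[/negbTE -> /negbTE ->].
have f2 : f (Alg S2) <= f O23.
  have [IA sA] := va S2.
  apply: opt23 => //; apply: subset_trans sA _.
  by apply/subsetP => y; rewrite !inE mem_cat => ->.
have f0 := fnn set0.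
set a := f (Alg (S2 ++ S3)) in h23 *.
set o := f O123 in hsub *.
have pos : 0 < c + 1 + eps by lra.
rewrite mulrAC ler_pdivrMr //.
have k1 : c * f X <= (1 + eps) * f (Alg S2).
  apply: le_trans hA; apply: le_trans h12; rewrite ler_pM2l //.
have k2 : c * (c * f X) <= c * ((1 + eps) * f (Alg S2)) by rewrite ler_pM2l.
have k3 : c * ((1 + eps) * f (Alg S2)) <= (1 + eps) * (c * f O23).
  rewrite mulrCA ler_pM2l; last lra.
  by rewrite ler_pM2l.
have k4 : c * (c * f Y) <= c * (c * f O23) by rewrite !ler_pM2l.
have k5 : c * (c * f O23) <= c * a by rewrite ler_pM2l.
have k6 : (1 + eps) * (c * f O23) <= (1 + eps) * a by rewrite ler_pM2l; lra.
have k7 : c ^+ 2 * o <= c * (c * f X) + c * (c * f Y).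
  rewrite -mulrDr -mulrDr expr2 -mulrA !ler_pM2l //; lra.
lra.
Qed.
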